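(* Let $E$ be a finite-dimensional complex Hilbert space, $e\in E$ a unit vector, $\tau\in(0,1)$, $\rho:=1-\tau$, and let $T_0\in B(E)_+$ be strictly positive. Define $$T_{n+1}:=T_n^{1/2}\bigl(I_E-\tau|e\rangle\langle e|\bigr)T_n^{1/2}\qquad(n\ge0).$$ Then each $T_n$ is strictly positive and $$T_{n+1}^{-1}=T_n^{-1}+\frac{\tau}{\rho}\,|T_n^{-1/2}e\rangle\langle T_n^{-1/2}e|.$$ Setting $\beta_n:=\langle e,T_n^{-1}e\rangle$ and $s_n:=\mathrm{tr}(T_n^{-1})$, one has $$\beta_{n+1}-\beta_n=\frac{\tau}{\rho}|\langle e,T_n^{-1/2}e\rangle|^2,\qquad s_{n+1}-s_n=\frac{\tau}{\rho}\beta_n.$$ In particular, for all $n\ge0$, $$\beta_n\ge\beta_0+n\frac{\tau}{\rho\|T_0\|},\qquad s_n\ge s_0+\frac{\tau}{\rho}n\beta_0+\frac{\tau^2}{2\rho^2\|T_0\|}n(n-1).$$ Consequently there is a constant $C>0$ depending only on $T_0$ and $\tau$ such that $$\lambda_{\min}(T_n)\le\frac{\dim E}{s_n}\le\frac{C}{n^2}\qquad(n\ge1).$$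
   Context: For vectors $x,y$, $|x\rangle\langle y|$ denotes the operator $z\mapsto\langle y,z\rangle x$. $B(E)_+$ denotes positive operators; $T^{1/2}$, $T^{-1/2}$ are the positive square root and its inverse. $\lambda_{\min}(T)$ is the smallest eigenvalue of $T$. *)

(* Defs.v *)
From HB Require Import structures.
From mathcomp Require Import all_boot all_order all_algebra.
From mathcomp Require Import complex.
From mathcomp Require Import boolp classical_sets reals.

Set Implicit Arguments.
Unset Strict Implicit.
Unset Printing Implicit Defensive.

Import Order.TTheory GRing.Theory Num.Theory.
Local Open Scope ring_scope.

Section Defs.
Variable R : realType.
Local Notation C := R[i].
Variable d : nat.
Local Notation vec := 'cV[C]_d.
Local Notation op := 'M[C]_d.

Definition adjmx m n (A : 'M[C]_(m, n)) : 'M[C]_(n, m) := (map_mx (@conjc R) A)^T.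

(* <x, y>, conjugate-linear in the first argument, linear in the second *)
Definition inner (x y : vec) : C := (adjmx x *m y) 0 0.

Definition vnorm (x : vec) : R := Num.sqrt (complex.Re (inner x x)).

Definition ketbra (x y : vec) : op := x *m adjmx y.

Definition psdmx (A : op) : Prop :=
  adjmx A = A /\ forall x : vec, 0 <= inner x (A *m x).
Definition pdmx (A : op) : Prop :=
  adjmx A = A /\ forall x : vec, x != 0 -> 0 < inner x (A *m x).

Definition psd_sqrt (A : op) : op :=
  xget 0 [set S : op | psdmx S /\ S *m S = A].

Definition opnorm (A : op) : R :=
  sup [set r : R | exists x : vec, vnorm x = 1 /\ r = vnorm (A *m x)].

(* smallest eigenvalue (of a self-adjoint operator, whose eigenvalues are real) *)
Definition lambda_min (A : op) : R :=
  inf [set r : R | eigenvalue A (real_complex R r)].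

Fixpoint Tseq (tau : R) (e : vec) (T0 : op) (n : nat) : op :=
  match n with
  | 0 => T0
  | n'.+1 => let S := psd_sqrt (Tseq tau e T0 n') in
             S *m (1%:M - real_complex R tau *: ketbra e e) *m S
  end.

End Defs.

(* Main.v *)
Require Import Defs.
From HB Require Import structures.
From mathcomp Require Import all_boot all_order all_algebra.
From mathcomp Require Import complex.
From mathcomp Require Import boolp classical_sets reals.
From mathcomp Require Import spectral sesquilinear.
From mathcomp Require Import ring lra.

Import Order.TTheory GRing.Theory Num.Theory.
Local Open Scope ring_scope.
Local Open Scope complex_scope.

Set Implicit Arguments.
Unset Strict Implicit.
Unset Printing Implicit Defensive.

Section Lib.
Variable R : realType.
Local Notation C := R[i].

Lemma adjmxK m n (A : 'M[C]_(m, n)) : adjmx (adjmx A) = A.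
Proof. by apply/matrixP => i j; rewrite !mxE conjcK. Qed.

Lemma adjmxM m n p (A : 'M[C]_(m, n)) (B : 'M[C]_(n, p)) :
  adjmx (A *m B) = adjmx B *m adjmx A.
Proof. by rewrite /adjmx map_mxM trmx_mul. Qed.

Lemma adjmxD m n (A B : 'M[C]_(m, n)) : adjmx (A + B) = adjmx A + adjmx B.
Proof. by rewrite /adjmx map_mxD linearD. Qed.

Lemma adjmxN m n (A : 'M[C]_(m, n)) : adjmx (- A) = - adjmx A.
Proof. by rewrite /adjmx map_mxN linearN. Qed.

Lemma adjmxZ m n a (A : 'M[C]_(m, n)) : adjmx (a *: A) = conjc a *: adjmx A.
Proof. by rewrite /adjmx map_mxZ linearZ. Qed.

Lemma adjmx1 n : adjmx (1%:M : 'M[C]_n) = 1%:M.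
Proof. by rewrite /adjmx map_mx1 trmx1. Qed.

Lemma adjmx_inv n (A : 'M[C]_n) : adjmx (invmx A) = invmx (adjmx A).
Proof. by rewrite /adjmx map_invmx trmx_inv. Qed.

Lemma adjmx_diag n (v : 'rV[C]_n) : adjmx (diag_mx v) = diag_mx (map_mx conjc v).
Proof. by rewrite /adjmx map_diag_mx tr_diag_mx. Qed.


Variable d : nat.
Local Notation vec := 'cV[C]_d.
Local Notation op := 'M[C]_d.

Lemma innerE (x y : vec) : inner x y = \sum_i conjc (x i 0) * y i 0.
Proof. by rewrite /inner mxE; apply: eq_bigr => i _; rewrite !mxE. Qed.

Lemma inner_adj (x y : vec) (A : op) : inner x (A *m y) = inner (adjmx A *m x) y.
Proof. by rewrite /inner adjmxM adjmxK mulmxA. Qed.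

Lemma inner_conj (x y : vec) : conjc (inner x y) = inner y x.
Proof.
rewrite !innerE rmorph_sum; apply: eq_bigr => i _.
rewrite rmorphM mulrC; congr (_ * _); case: (x i 0) => ? ? /=; by rewrite opprK.
Qed.

Lemma innerDr (x y z : vec) : inner x (y + z) = inner x y + inner x z.
Proof. by rewrite /inner mulmxDr mxE. Qed.
Lemma innerDl (x y z : vec) : inner (x + y) z = inner x z + inner y z.
Proof. by rewrite /inner adjmxD mulmxDl mxE. Qed.
Lemma innerNr (x y : vec) : inner x (- y) = - inner x y.
Proof. by rewrite /inner mulmxN mxE. Qed.
Lemma innerBr (x y z : vec) : inner x (y - z) = inner x y - inner x z.
Proof. by rewrite innerDr innerNr. Qed.
Lemma innerZr (x y : vec) a : inner x (a *: y) = a * inner x y.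
Proof. by rewrite /inner -scalemxAr mxE. Qed.
Lemma innerZl (x y : vec) a : inner (a *: x) y = conjc a * inner x y.
Proof. by rewrite /inner adjmxZ -scalemxAl mxE. Qed.

Lemma inner_ge0 (x : vec) : 0 <= inner x x.
Proof.
rewrite innerE; apply: sumr_ge0 => i _; rewrite mulrC; exact: mulcJ_ge0.
Qed.

Lemma inner_eq0 (x : vec) : inner x x = 0 -> x = 0.
Proof.
rewrite innerE => /eqP; rewrite psumr_eq0; last first.
  by move=> i _; rewrite mulrC; exact: mulcJ_ge0.
move=> /allP H; apply/matrixP => i j; rewrite ord1 mxE.
have := H i (mem_index_enum _); rewrite mulrC -sqr_normc sqrf_eq0 normr_eq0.
by move/eqP.
Qed.

Lemma inner_gt0 (x : vec) : x != 0 -> 0 < inner x x.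
Proof.
move=> nz; rewrite lt_def inner_ge0 andbT; apply/eqP => /inner_eq0 h.
by rewrite h eqxx in nz.
Qed.

Lemma conj_real (z : C) : conjc z = z -> z = (complex.Re z)%:C.
Proof.
case: z => a b /= [] h; congr (_ +i* _); lra.
Qed.

Lemma ge0_real (z : C) : 0 <= z -> z = (complex.Re z)%:C.
Proof. by case: z => a b; rewrite lecE /= => /andP[/eqP -> _]. Qed.

Definition herm (A : op) := adjmx A = A.

Lemma herm_real (A : op) (x : vec) : herm A -> inner x (A *m x) = (complex.Re (inner x (A *m x)))%:C.
Proof.
move=> hA; apply: conj_real; by rewrite inner_conj inner_adj hA.
Qed.


Lemma tstarE m n (M : 'M[C]_(m, n)) : (M ^t Num.conj)%sesqui = adjmx M.
Proof. by apply/matrixP => i j; rewrite !mxE. Qed.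

Lemma adjmx_delta (j : 'I_d) : adjmx (delta_mx j 0 : vec) = delta_mx 0 j.
Proof.
apply/matrixP => a b; rewrite !mxE andbC.
exact: conjc_nat.
Qed.

Lemma inner_delta (j : 'I_d) : inner (delta_mx j 0 : vec) (delta_mx j 0) = 1.
Proof. by rewrite /inner adjmx_delta mul_delta_mx mxE !eqxx. Qed.

Lemma inner_diag_ge0 (v : 'rV[C]_d) (y : vec) :
  (forall i, 0 <= v 0 i) -> 0 <= inner y (diag_mx v *m y).
Proof.
move=> hv; rewrite innerE; apply: sumr_ge0 => i _.
rewrite mul_diag_mx mxE mulrCA; apply: mulr_ge0 => //.
rewrite mulrC; exact: mulcJ_ge0.
Qed.

Definition unitary (P : op) := P *m adjmx P = 1%:M /\ adjmx P *m P = 1%:M.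

Definition rdiag (lam : 'I_d -> R) : op := diag_mx (\row_j (lam j)%:C).

Lemma pd_spectral (T : op) : pdmx T -> exists (P : op) (lam : 'I_d -> R),
  unitary P /\ (forall j, 0 < lam j) /\ T = adjmx P *m rdiag lam *m P.
Proof.
move=> [hT pT].
have hn : T \is normalmx.
  by rewrite qualifE !tstarE hT.
have := orthomx_spectralP hn.
set P := spectralmx T; set sp := spectral_diag T => eT.
have uP : P \is unitarymx := spectral_unitarymx T.
have iP : invmx P = adjmx P by rewrite invmx_unitary // tstarE.
have PP : P *m adjmx P = 1%:M by rewrite -iP mulmxV // spectral_unit.
have PP' : adjmx P *m P = 1%:M by rewrite -iP mulVmx // spectral_unit.
rewrite iP in eT.
have sp_pos : forall j, 0 < sp 0 j.
  move=> j; pose x : vec := adjmx P *m delta_mx j 0.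
  have Tx : T *m x = sp 0 j *: x.
    rewrite eT /x -!mulmxA (mulmxA P) PP mul1mx scalemxAr; congr (_ *m _).
    rewrite mul_diag_mx; apply/matrixP => a b; rewrite !mxE ord1.
    by case: (a == j) /eqP => [->|_]; rewrite ?mulr1 ?mulr0.
  have xx : inner x x = 1.
    by rewrite /x -inner_adj mulmxA PP mul1mx inner_delta.
  have : x != 0 by apply/eqP => h; move: xx; rewrite h /inner mulmx0 mxE => /eqP; rewrite eq_sym oner_eq0.
  move=> /pT; by rewrite Tx innerZr xx mulr1.
exists P, (fun j => complex.Re (sp 0 j)); split; first by [].
split; first by move=> j; have := sp_pos j; rewrite ltcE => /andP[].
rewrite {1}eT /rdiag; congr (_ *m diag_mx _ *m _).
apply/rowP => j; rewrite mxE; apply: ge0_real; exact: ltW.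
Qed.


Lemma rdiagM (f g : 'I_d -> R) : rdiag f *m rdiag g = rdiag (fun j => f j * g j).
Proof. by rewrite /rdiag mulmx_diag; congr diag_mx; apply/rowP => j; rewrite !mxE rmorphM. Qed.

Lemma adjmx_rdiag (f : 'I_d -> R) : adjmx (rdiag f) = rdiag f.
Proof. by rewrite /rdiag adjmx_diag; congr diag_mx; apply/rowP => j; rewrite !mxE conjc_real. Qed.

Lemma rdiag1 : rdiag (fun _ => 1) = 1%:M.
Proof. by rewrite /rdiag -diag_const_mx; congr diag_mx; apply/rowP => j; rewrite !mxE. Qed.

Lemma sandwichM (P A B : op) : unitary P ->
  (adjmx P *m A *m P) *m (adjmx P *m B *m P) = adjmx P *m (A *m B) *m P.
Proof.
move=> [PP _]; by rewrite !mulmxA -(mulmxA _ P) PP mulmx1.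
Qed.

Lemma sandwich_herm (P : op) f : herm (adjmx P *m rdiag f *m P).
Proof. by rewrite /herm !adjmxM adjmxK adjmx_rdiag mulmxA. Qed.

Lemma sandwich_ge0 (P : op) f (x : vec) : (forall j, 0 <= f j) ->
  0 <= inner x (adjmx P *m rdiag f *m P *m x).
Proof.
move=> hf; rewrite -!mulmxA inner_adj adjmxK; apply: inner_diag_ge0 => j.
by rewrite mxE ler0c.
Qed.

Lemma pd_sqrt_ex (T : op) : pdmx T -> exists S : op, psdmx S /\ S *m S = T.
Proof.
move=> /pd_spectral [P [lam [uP [lp ->]]]].
exists (adjmx P *m rdiag (fun j => Num.sqrt (lam j)) *m P); split; first split.
- exact: sandwich_herm.
- by move=> x; apply: sandwich_ge0 => j; exact: sqrtr_ge0.
rewrite sandwichM // rdiagM; congr (_ *m rdiag _ *m _); apply: funext => j.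
by rewrite -expr2 sqr_sqrtr // ltW.
Qed.

Lemma pd_inv (T : op) : pdmx T -> exists (P : op) (lam : 'I_d -> R),
  unitary P /\ (forall j, 0 < lam j) /\ T = adjmx P *m rdiag lam *m P /\
  T \in unitmx /\ invmx T = adjmx P *m rdiag (fun j => (lam j)^-1) *m P.
Proof.
move=> /pd_spectral [P [lam [uP [lp eT]]]].
have h1 : T *m (adjmx P *m rdiag (fun j => (lam j)^-1) *m P) = 1%:M.
  rewrite eT sandwichM // rdiagM.
  have -> : (fun j => lam j * (lam j)^-1) = (fun _ => 1).
    by apply: funext => j; rewrite mulfV // gt_eqF.
  by rewrite rdiag1 mulmx1 (proj2 uP).
have [uT _] := mulmx1_unit h1.
exists P, lam; do !split => //.
by rewrite -[LHS]mulmx1 -h1 mulKmx.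
Qed.

Lemma pd_unit (T : op) : pdmx T -> T \in unitmx.
Proof. by move=> /pd_inv [P [lam [_ [_ [_ [h _]]]]]]. Qed.

Lemma pd_inv_herm (T : op) : pdmx T -> herm (invmx T).
Proof. by move=> /pd_inv [P [lam [_ [_ [_ [_ ->]]]]]]; exact: sandwich_herm. Qed.

Lemma pd_inv_ge0 (T : op) (x : vec) : pdmx T -> 0 <= inner x (invmx T *m x).
Proof.
move=> /pd_inv [P [lam [_ [lp [_ [_ ->]]]]]]; apply: sandwich_ge0 => j.
by rewrite invr_ge0 ltW.
Qed.


Lemma pd_spec2 (T : op) : pdmx T -> exists lam : 'I_d -> R,
  (forall j, 0 < lam j) /\ \tr (invmx T) = (\sum_j (lam j)^-1)%:C /\
  (forall j, eigenvalue T (lam j)%:C).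
Proof.
move=> /pd_inv [P [lam [uP [lp [eT [uT iT]]]]]].
exists lam; split => //; split.
  rewrite iT mxtrace_mulC mulmxA (proj1 uP) mul1mx /rdiag mxtrace_diag rmorph_sum.
  by apply: eq_bigr => j _; rewrite mxE.
move=> j; apply/eigenvalueP; exists (delta_mx 0 j *m P).
  rewrite eT !mulmxA -(mulmxA _ P) (proj1 uP) mulmx1 scalemxAl; congr (_ *m _).
  rewrite /rdiag mul_mx_diag; apply/matrixP => a b; rewrite !mxE.
  by rewrite ord1 eqxx /=; case: (b == j) /eqP => [->|_]; rewrite ?mulr1 ?mul1r ?mulr0 ?mul0r.
apply/eqP => h; have := congr1 (fun M => M *m adjmx P) h.
rewrite -mulmxA (proj1 uP) mulmx1 mul0mx => /matrixP /(_ 0 j); rewrite !mxE !eqxx /=.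
by move/eqP; rewrite oner_eq0.
Qed.

Lemma eig_pos (T : op) (r : R) : pdmx T -> eigenvalue T r%:C -> 0 < r.
Proof.
move=> [hT pT] /eigenvalueP [v hv vnz].
pose x : vec := adjmx v.
have Tx : T *m x = r%:C *: x.
  by rewrite /x -{1}hT -adjmxM hv adjmxZ conjc_real.
have xnz : x != 0.
  by apply: contra vnz => /eqP h; rewrite -(adjmxK v) -/x h; apply/eqP/matrixP => a b; rewrite !mxE conjc0.
have := pT x xnz; rewrite Tx innerZr pmulr_lgt0 ?inner_gt0 //.
by rewrite -(rmorph0 (real_complex R)) ltcR.
Qed.

Lemma lambda_min_le (T : op) : pdmx T -> (0 < d)%N ->
  0 < complex.Re (\tr (invmx T)) /\
  \tr (invmx T) = (complex.Re (\tr (invmx T)))%:C /\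
  lambda_min T <= d%:R / complex.Re (\tr (invmx T)).
Proof.
move=> pT d0; have [lam [lp [tr eig]]] := pd_spec2 pT.
rewrite tr /=.
set S := \sum_j (lam j)^-1.
have i0 : 'I_d := Ordinal d0.
case: (@arg_minP _ _ _ i0 xpredT lam isT) => j0 _ hmin.
have Spos : 0 < S.
  rewrite /S (bigD1 j0) //=; apply: ltr_pwDl; first by rewrite invr_gt0.
  by apply: sumr_ge0 => j _; rewrite invr_ge0 ltW.
have Sle : S <= d%:R * (lam j0)^-1.
  have -> : d%:R * (lam j0)^-1 = \sum_(j < d) (lam j0)^-1 by rewrite sumr_const card_ord mulr_natl.
  apply: ler_sum => j _.
  by rewrite lef_pV2 ?posrE //; exact: hmin.
split => //; split => //.
have -> : lambda_min T = inf [set r : R | eigenvalue T r%:C] by [].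
apply: (@le_trans _ _ (lam j0)).
  apply: ge_inf; last exact: eig.
  by exists 0 => r /= hr; apply: ltW; exact: (eig_pos pT hr).
rewrite ler_pdivlMr //.
have l0 := lp j0.
rewrite -(@ler_pM2r _ (lam j0)^-1) ?invr_gt0 // mulrAC mulfV ?gt_eqF // mul1r.
by [].
Qed.


Lemma ReD (a b : C) : complex.Re (a + b) = complex.Re a + complex.Re b.
Proof. by case: a; case: b. Qed.
Lemma ReN (a : C) : complex.Re (- a) = - complex.Re a.
Proof. by case: a. Qed.
Lemma ReRM (t : R) (a : C) : complex.Re (t%:C * a) = t * complex.Re a.
Proof. by case: a => x y /=; rewrite mul0r subr0. Qed.
Lemma Re_conj (a : C) : complex.Re (conjc a) = complex.Re a.
Proof. by case: a. Qed.
Lemma ReR (t : R) : complex.Re t%:C = t.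
Proof. by []. Qed.
Lemma Re_ge0 (a : C) : 0 <= a -> 0 <= complex.Re a.
Proof. by case: a => x y; rewrite lecE /= => /andP[]. Qed.
Lemma Re_gt0 (a : C) : 0 < a -> 0 < complex.Re a.
Proof. by case: a => x y; rewrite ltcE /= => /andP[]. Qed.
Lemma Re_le (a b : C) : a <= b -> complex.Re a <= complex.Re b.
Proof. by case: a; case: b => x y x' y'; rewrite lecE /= => /andP[]. Qed.

Lemma quad_le (A B c : R) : 0 <= B -> (forall t, 0 <= A + 2 * t * c + t ^+ 2 * B) ->
  c ^+ 2 <= A * B.
Proof.
move=> B0 h; have [Bz|Bp] := eqVneq B 0.
  have [cz|cnz] := eqVneq c 0; first by rewrite cz Bz expr0n /= mulr0.
  have := h (- (A + 1) / (2 * c)).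
  have -> : 2 * (- (A + 1) / (2 * c)) * c = - (A + 1) by field; rewrite cnz.
  by rewrite Bz mulr0 addr0; lra.
have Bpos : 0 < B by rewrite lt_def Bp B0.
have := h (- c / B).
have tB : (- c / B) * B = - c by field; rewrite Bp.
move: (- c / B) tB => t tB hh.
nra.
Qed.

Lemma cs_re (P : op) (x y : vec) : psdmx P ->
  (complex.Re (inner x (P *m y)))^+2 <=
  complex.Re (inner x (P *m x)) * complex.Re (inner y (P *m y)).
Proof.
move=> [hP pP]; apply: quad_le; first exact: Re_ge0.
move=> t; have := Re_ge0 (pP (x + t%:C *: y)).
rewrite mulmxDr -scalemxAr !innerDl !innerDr !innerZl !innerZr conjc_real.
have -> : inner y (P *m x) = conjc (inner x (P *m y)).
  by rewrite inner_conj inner_adj hP.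
move: (inner x (P *m x)) (inner x (P *m y)) (inner y (P *m y)) => [a1 a2] [b1 b2] [c1 c2] /=.
move=> hh; apply: (le_trans hh); rewrite le_eqVlt; apply/orP; left; apply/eqP.
ring.
Qed.


Lemma inv_right (A B : op) : A *m B = 1%:M -> invmx A = B.
Proof.
move=> h; have [uA _] := mulmx1_unit h.
by rewrite -[LHS]mulmx1 -h mulKmx.
Qed.

Lemma ketbra_mul (u v y : vec) : ketbra u v *m y = inner v y *: u.
Proof.
rewrite /ketbra -mulmxA.
have -> : adjmx v *m y = (inner v y)%:M.
  by apply/matrixP => i j; rewrite !ord1 [RHS]mxE eqxx mulr1n.
by apply/matrixP => i j; rewrite !mxE big_ord1 !ord1 mxE eqxx mulr1n mulrC.
Qed.

Lemma adjmx_ketbra (u v : vec) : adjmx (ketbra u v) = ketbra v u.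
Proof. by rewrite /ketbra adjmxM adjmxK. Qed.

Lemma psd_herm (S : op) : psdmx S -> herm S.
Proof. by case. Qed.

Lemma step (T S : op) (e : vec) (tau : R) : pdmx T -> psdmx S -> S *m S = T ->
  inner e e = 1 -> 0 < tau < 1 ->
  let T' := S *m (1%:M - tau%:C *: ketbra e e) *m S in
  let u := invmx S *m e in
  [/\ pdmx T', invmx T' = invmx T + (tau / (1 - tau))%:C *: ketbra u u,
      forall x, inner x (T' *m x) <= inner x (T *m x) &
      1 <= complex.Re (`|inner e u| ^+ 2) * complex.Re (inner e (T *m e))].
Proof.
move=> pT psS STe ee /andP[t0 t1] T' u.
have hS : adjmx S = S := psd_herm psS.
have uT := pd_unit pT.
have uS : S \in unitmx by move: uT; rewrite -STe unitmx_mul => /andP[].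
pose E := ketbra e e.
pose M := 1%:M - tau%:C *: E.
have hM : adjmx M = M.
  by rewrite /M adjmxD adjmxN adjmxZ adjmx1 conjc_real adjmx_ketbra.
have My : forall y, inner y (M *m y) = inner y y - tau%:C * (inner e y * conjc (inner e y)).
  move=> y; rewrite /M mulmxBl mul1mx -scalemxAl ketbra_mul innerBr !innerZr.
  by rewrite -(inner_conj e y).
have T'x : forall x, inner x (T' *m x) = inner (S *m x) (M *m (S *m x)).
  by move=> x; rewrite /T' -!mulmxA inner_adj hS.
have Tx : forall x, inner x (T *m x) = inner (S *m x) (S *m x).
  by move=> x; rewrite -STe -mulmxA inner_adj hS.
have mono : forall x, inner x (T' *m x) <= inner x (T *m x).
  move=> x; rewrite T'x Tx My gerBl; apply: mulr_ge0; first by rewrite ler0c ltW.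
  exact: mulcJ_ge0.
have pdT' : pdmx T'.
  split.
    by rewrite /T' !adjmxM hS hM mulmxA.
  move=> x xnz; rewrite T'x My.
  set y := S *m x.
  have ynz : y != 0.
    by apply: contra xnz => /eqP hy; rewrite -(mulKmx uS x) -/y hy mulmx0.
  pose z := y + (- inner e y) *: e.
  have zz : inner z z = inner y y - inner e y * conjc (inner e y).
    rewrite /z !innerDl !innerDr !innerZl !innerZr ee -(inner_conj e y) rmorphN.
    move: (inner y y) (inner e y) => [a1 a2] [b1 b2].
    by apply/eqP; rewrite eq_complex /=; apply/andP; split; apply/eqP; ring.
  have -> : inner y y - tau%:C * (inner e y * conjc (inner e y)) =
            (1 - tau)%:C * inner y y + tau%:C * inner z z.
    rewrite zz; move: (inner y y) (inner e y) => [a1 a2] [b1 b2].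
    by apply/eqP; rewrite eq_complex /=; apply/andP; split; apply/eqP; ring.
  apply: ltr_wpDr; first by apply: mulr_ge0; [rewrite ler0c ltW | exact: inner_ge0].
  apply: mulr_gt0; last exact: inner_gt0.
  by rewrite -(rmorph0 (real_complex R)) ltcR subr_gt0.
split => //.
- have EE : E *m E = E by rewrite {1}/E /ketbra mulmxA ketbra_mul ee scale1r.
  set k := tau / (1 - tau).
  have ME : M *m (1%:M + k%:C *: E) = 1%:M.
    rewrite /M mulmxBl mul1mx -scalemxAl mulmxDr mulmx1 -scalemxAr EE scalerDr scalerA.
    rewrite -scalerDl -addrA -scalerBl.
    have -> : k%:C - (tau%:C + tau%:C * k%:C) = 0.
      rewrite -rmorphM -rmorphD -rmorphB.
      have -> : k - (tau + tau * k) = 0.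
        rewrite /k; field; apply/eqP => h; move: t1; rewrite -subr_gt0; lra.
      exact: rmorph0.
    by rewrite scale0r addr0.
  have iT : invmx T = invmx S *m invmx S.
    by apply: inv_right; rewrite -STe -mulmxA (mulmxA S (invmx S)) mulmxV // mul1mx mulmxV.
  have ku : ketbra u u = invmx S *m E *m invmx S.
    by rewrite /ketbra /u adjmxM adjmx_inv hS /E /ketbra !mulmxA.
  apply: inv_right.
  have -> : invmx T + k%:C *: ketbra u u = invmx S *m (1%:M + k%:C *: E) *m invmx S.
    by rewrite iT ku mulmxDr mulmx1 mulmxDl -scalemxAr -scalemxAl.
  rewrite /T' -/E -/M -!mulmxA (mulmxA S (invmx S)) mulmxV // mul1mx.
  by rewrite (mulmxA M) ME mul1mx mulmxV.
-
have Su : S *m u = e by rewrite /u mulKVmx.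
have h1 := cs_re u e psS.
have h2 := @cs_re 1%:M e (S *m e).
rewrite !mul1mx in h2.
have ps1 : psdmx (1%:M : op) by split; [exact: adjmx1 | move=> x; rewrite mul1mx; exact: inner_ge0].
have {h2} h2 := h2 ps1.
rewrite ee -Tx /= mul1r in h2.
rewrite (inner_adj u) hS Su ee /= in h1.
have huu : inner u (S *m u) = inner u e by rewrite Su.

have a0 : 0 <= complex.Re (inner e (S *m e)) by apply: Re_ge0; case: psS.
have b0 : 0 <= complex.Re (inner u e) by rewrite -huu; apply: Re_ge0; case: psS.
have h3 : complex.Re (inner u e) ^+ 2 <= complex.Re (`|inner e u| ^+ 2).
  rewrite -(inner_conj e u) sqr_normc; move: (inner e u) => [a b] /=; nra.
rewrite expr1n in h1.
nra.
Qed.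


Lemma natM1 (n : nat) : ((n * (n - 1))%:R : R) = n%:R * (n%:R - 1).
Proof.
case: n => [|n]; first by rewrite mul0n mul0r.
by rewrite natrM subn1 /= -addn1 natrD addrK.
Qed.

Lemma vnorm1 (x : vec) : vnorm x = 1 -> inner x x = 1.
Proof.
move=> h; rewrite (ge0_real (inner_ge0 x)).
have := sqr_sqrtr (Re_ge0 (inner_ge0 x)); rewrite -/(vnorm x) h expr1n => <-.
by [].
Qed.

Lemma inner1_vnorm (x : vec) : inner x x = 1 -> vnorm x = 1.
Proof. by move=> h; rewrite /vnorm h /= sqrtr1. Qed.

Lemma norm_le1 (x : vec) i : inner x x = 1 -> `|x i 0| <= 1.
Proof.
move=> h.
have h2 : `|x i 0| ^+ 2 <= 1.
  rewrite -h innerE (bigD1 i) //= sqr_normc mulrC lerDl.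
  by apply: sumr_ge0 => j _; rewrite mulrC; exact: mulcJ_ge0.
rewrite -(expr1n _ 2) in h2.
have := @ler_pXn2r _ 2 _ `|x i 0| 1; rewrite !nnegrE normr_ge0 ler01 => /(_ isT isT) => <- //.
Qed.

Lemma opnorm_bnd (A : op) : exists K : R, forall x : vec, inner x x = 1 -> vnorm (A *m x) <= K.
Proof.
pose M i := \sum_j `|A i j|.
pose K := \sum_i M i ^+ 2.
exists (Num.sqrt (complex.Re K)) => x hx.
rewrite /vnorm ler_sqrt; last by apply: Re_ge0; apply: sumr_ge0 => i _; apply: exprn_ge0; apply: sumr_ge0 => j _; exact: normr_ge0.
apply: Re_le; rewrite innerE; apply: ler_sum => i _.
rewrite mulrC -sqr_normc.
have Mi : `|(A *m x) i 0| <= M i.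
  rewrite mxE; apply: (le_trans (ler_norm_sum _ _ _)); apply: ler_sum => j _.
  rewrite normrM -[X in _ <= X]mulr1; apply: ler_wpM2l => //; exact: norm_le1.
by apply: lerXn2r => //; rewrite nnegrE // (le_trans _ Mi).
Qed.

Lemma opnorm_ge (A : op) (x : vec) : inner x x = 1 ->
  complex.Re (inner x (A *m x)) <= opnorm A.
Proof.
move=> hx.
have ps1 : psdmx (1%:M : op) by split; [exact: adjmx1 | move=> y; rewrite mul1mx; exact: inner_ge0].
have h := @cs_re 1%:M x (A *m x) ps1.
rewrite !mul1mx hx /= mul1r in h.
apply: (@le_trans _ _ (vnorm (A *m x))).
  have h0 := Re_ge0 (inner_ge0 (A *m x)).
  rewrite /vnorm -(ler_sqrt _ h0) in h.
  apply: le_trans h; rewrite sqrtr_sqr; exact: ler_norm.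
apply: sup_upper_bound; last by exists x; split => //; exact: inner1_vnorm.
split; first by exists (vnorm (A *m x)), x; split => //; exact: inner1_vnorm.
have [K hK] := opnorm_bnd A.
exists K => r [y [hy ->]]; apply: hK; exact: vnorm1.
Qed.

Lemma psd_sqrtP (T : op) : pdmx T -> psdmx (psd_sqrt T) /\ psd_sqrt T *m psd_sqrt T = T.
Proof. by move=> /pd_sqrt_ex h; exact: (@xgetPex _ 0 [set S : op | psdmx S /\ S *m S = T] h). Qed.


Lemma seq_facts (tau : R) (T0 : op) (e : vec) : 0 < tau < 1 -> pdmx T0 -> inner e e = 1 ->
  [/\ (forall n, pdmx (Tseq tau e T0 n)),
      (forall n, invmx (Tseq tau e T0 n.+1) = invmx (Tseq tau e T0 n) +
         (tau / (1 - tau))%:C *: ketbra (invmx (psd_sqrt (Tseq tau e T0 n)) *m e)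
                                        (invmx (psd_sqrt (Tseq tau e T0 n)) *m e)),
      (forall n, 1 <= complex.Re (`|inner e (invmx (psd_sqrt (Tseq tau e T0 n)) *m e)| ^+ 2)
                      * opnorm T0),
      0 < opnorm T0 & (0 < d)%N].
Proof.
move=> ht pT0 ee.
set T := Tseq tau e T0.
have pdT : forall n, pdmx (T n).
  elim => [//|n IH]; have [hS hSS] := psd_sqrtP IH.
  by case: (step IH hS hSS ee ht).
have enz : e != 0.
  by apply/eqP => h; move: ee; rewrite h /inner mulmx0 mxE => /eqP; rewrite eq_sym oner_eq0.
have tpos : forall n, 0 < complex.Re (inner e (T n *m e)).
  by move=> n; apply: Re_gt0; case: (pdT n) => _; apply.
have tmono : forall n, complex.Re (inner e (T n *m e)) <= complex.Re (inner e (T0 *m e)).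
  elim => [//|n IH]; apply: le_trans IH; apply: Re_le.
  have [hS hSS] := psd_sqrtP (pdT n); by case: (step (pdT n) hS hSS ee ht).
have tN := opnorm_ge T0 ee.
have Npos : 0 < opnorm T0 := lt_le_trans (tpos 0%N) tN.
split => //.
- move=> n; have [hS hSS] := psd_sqrtP (pdT n); by case: (step (pdT n) hS hSS ee ht).
- move=> n; have [hS hSS] := psd_sqrtP (pdT n); case: (step (pdT n) hS hSS ee ht) => _ _ _ h.
  apply: (le_trans h); apply: ler_wpM2l; first by apply: Re_ge0; apply: exprn_ge0.
  exact: le_trans (tmono n) tN.
- rewrite lt0n; apply/eqP => d0; move: ee; rewrite innerE big1.
    by move/eqP; rewrite eq_sym oner_eq0.
  by move=> i _; have := ltn_ord i; rewrite {2}d0.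
Qed.


Lemma sqrt_inv (T : op) : pdmx T ->
  invmx T = invmx (psd_sqrt T) *m invmx (psd_sqrt T) /\
  adjmx (invmx (psd_sqrt T)) = invmx (psd_sqrt T).
Proof.
move=> pT; have [psS SS] := psd_sqrtP pT.
set S := psd_sqrt T in psS SS *.
have uT := pd_unit pT.
have uS : S \in unitmx by move: uT; rewrite -SS unitmx_mul => /andP[].
split; last by rewrite adjmx_inv (psd_herm psS).
by apply: inv_right; rewrite -SS -mulmxA (mulmxA S (invmx S)) mulmxV // mul1mx mulmxV.
Qed.

Lemma tr_ketbra (u : vec) : \tr (ketbra u u) = inner u u.
Proof. by rewrite /ketbra mxtrace_mulC /mxtrace big_ord1. Qed.

Lemma inner_ketbra (e u : vec) : inner e (ketbra u u *m e) = `|inner e u| ^+ 2.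
Proof. by rewrite ketbra_mul innerZr sqr_normc inner_conj mulrC. Qed.

Lemma key_id (k q K2 x b : R) : k * q = 2 * K2 ->
  k * (x + 1%:R) * b + K2 * ((x + 1%:R) * (x + 1%:R - 1)) =
  k * x * b + K2 * (x * (x - 1)) + k * (b + x * q).
Proof.
move=> h; have -> : k * (b + x * q) = k * b + x * (k * q) by ring.
rewrite h; ring.
Qed.

Lemma real_facts (tau : R) (T0 : op) (e : vec) : 0 < tau < 1 -> pdmx T0 -> inner e e = 1 ->
  let T := Tseq tau e T0 in
  let k := tau / (1 - tau) in
  let N := opnorm T0 in
  let b n := complex.Re (inner e (invmx (T n) *m e)) in
  let sr n := complex.Re (\tr (invmx (T n))) in
  [/\ (forall n, inner e (invmx (T n) *m e) = (b n)%:C),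
      (forall n, \tr (invmx (T n)) = (sr n)%:C),
      (forall n, inner e (invmx (T n.+1) *m e) - inner e (invmx (T n) *m e) =
                 k%:C * `|inner e (invmx (psd_sqrt (T n)) *m e)| ^+ 2),
      (forall n, \tr (invmx (T n.+1)) - \tr (invmx (T n)) = k%:C * inner e (invmx (T n) *m e)) &
    [/\ (forall n, b 0%N + n%:R * (tau / ((1 - tau) * N)) <= b n),
      (forall n, sr 0%N + k * n%:R * b 0%N + tau ^+ 2 / (2 * (1 - tau) ^+ 2 * N) * (n%:R * (n%:R - 1))
                 <= sr n) &
      [/\ 0 <= b 0%N, 0 < sr 0%N, 0 < N & (0 < d)%N]]].
Proof.
move=> ht pT0 ee T k N b sr.
have [pdT hinv hlow Npos d0] := seq_facts ht pT0 ee.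
have /andP[t0 t1] := ht.
have kpos : 0 < k by rewrite /k divr_gt0 // subr_gt0.
have breal : forall n, inner e (invmx (T n) *m e) = (b n)%:C.
  by move=> n; apply: herm_real; apply: pd_inv_herm.
have sreal : forall n, \tr (invmx (T n)) = (sr n)%:C.
  by move=> n; have [_ [h _]] := lambda_min_le (pdT n) d0.
have hbeta : forall n, inner e (invmx (T n.+1) *m e) - inner e (invmx (T n) *m e) =
                 k%:C * `|inner e (invmx (psd_sqrt (T n)) *m e)| ^+ 2.
  move=> n; rewrite hinv mulmxDl innerDr addrAC subrr add0r -scalemxAl innerZr.
  by rewrite inner_ketbra.
have hs : forall n, \tr (invmx (T n.+1)) - \tr (invmx (T n)) = k%:C * inner e (invmx (T n) *m e).
  move=> n; rewrite hinv mxtraceD mxtraceZ tr_ketbra addrC addKr; congr (_ * _).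
  have [iT aS] := sqrt_inv (pdT n).
  by rewrite iT -mulmxA [RHS]inner_adj aS.
have hb' : forall n, b n.+1 = b n + k * complex.Re (`|inner e (invmx (psd_sqrt (T n)) *m e)| ^+ 2).
  move=> n; have := hbeta n; rewrite /b.
  move: (inner e (invmx (T n.+1) *m e)) (inner e (invmx (T n) *m e)) => A B.
  move: (`|_| ^+ 2) => W /(congr1 (@complex.Re R)).
  rewrite ReD ReN ReRM => <-; ring.
have hs' : forall n, sr n.+1 = sr n + k * b n.
  move=> n; have := hs n; rewrite /sr /b.
  move: (\tr (invmx (T n.+1))) (\tr (invmx (T n))) (inner e (invmx (T n) *m e)) => A B W.
  move=> /(congr1 (@complex.Re R)).
  rewrite ReD ReN ReRM => <-; ring.
have b0pos : 0 <= b 0%N by apply: Re_ge0; apply: pd_inv_ge0.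
have s0pos : 0 < sr 0%N by have [h _] := lambda_min_le pT0 d0.
clearbody b sr.
set q := tau / ((1 - tau) * N).
have qN : q * N = k by rewrite /q /k; field; apply/andP; split; rewrite gt_eqF // subr_gt0.
have hbl : forall n, b 0%N + n%:R * q <= b n.
  elim => [|n IH]; first by rewrite mul0r addr0.
  rewrite hb' -addn1 natrD mulrDl mul1r addrA.
  set W := complex.Re _.
  have W0 : 0 <= W by apply: Re_ge0; apply: exprn_ge0.
  have hW : 1 <= W * N := hlow n.
  have : q <= k * W.
    rewrite -(ler_pM2r Npos) qN -mulrA -[X in X <= _]mulr1.
    apply: ler_wpM2l; [exact: ltW | exact: hW].
  by move=> hq; apply: lerD.
set K2 := tau ^+ 2 / (2 * (1 - tau) ^+ 2 * N).
have kq : k * q = 2 * K2.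
  rewrite /k /q /K2; field; apply/andP; split; rewrite gt_eqF // ?subr_gt0 //.
have hsl : forall n, sr 0%N + k * n%:R * b 0%N + K2 * (n%:R * (n%:R - 1)) <= sr n.
  elim => [|n IH]; first by rewrite mulr0 !mul0r mulr0 !addr0.
  rewrite hs' -addn1 natrD.
  have := hbl n; set x := (n%:R : R) => hb.
  have key : k * (x + 1%:R) * b 0%N + K2 * ((x + 1%:R) * (x + 1%:R - 1)) =
             k * x * b 0%N + K2 * (x * (x - 1)) + k * (b 0%N + x * q).
    exact: key_id.
  have : k * (b 0%N + x * q) <= k * b n by apply: ler_wpM2l => //; exact: ltW.
  by move=> hk; rewrite -addrA key !addrA; apply: lerD.
by split => //; split => //; split.
Qed.

End Lib.

Unset Implicit Arguments.
Local Close Scope complex_scope.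

Theorem proposition3p4 (R : realType) (d : nat) (tau : R) (T0 : 'M[R[i]]_d) :
  0 < tau < 1 -> pdmx T0 ->
  let rho := 1 - tau in
  (forall e : 'cV[R[i]]_d, vnorm e = 1 ->
    let T := Tseq tau e T0 in
    let Tmhalf n := invmx (psd_sqrt (T n)) in
    let beta n := inner e (invmx (T n) *m e) in
    let s n := \tr (invmx (T n)) in
    (forall n, pdmx (T n)) /\
    (forall n, invmx (T n.+1) =
               invmx (T n) + real_complex R (tau / rho) *: ketbra (Tmhalf n *m e) (Tmhalf n *m e)) /\
    (forall n, beta n.+1 - beta n = real_complex R (tau / rho) * `|inner e (Tmhalf n *m e)| ^+ 2) /\
    (forall n, s n.+1 - s n = real_complex R (tau / rho) * beta n) /\
    (forall n, beta 0 + real_complex R (n%:R * (tau / (rho * opnorm T0))) <= beta n) /\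
    (forall n, s 0 + real_complex R ((tau / rho) * n%:R) * beta 0
                 + real_complex R (tau ^+ 2 / (2 * rho ^+ 2 * opnorm T0) * (n * (n - 1))%:R)
               <= s n))
  /\
  (exists c : R, 0 < c /\
     forall e : 'cV[R[i]]_d, vnorm e = 1 ->
     forall n : nat, (1 <= n)%N ->
       let sn := \tr (invmx (Tseq tau e T0 n)) in
       real_complex R (lambda_min (Tseq tau e T0 n)) <= d%:R / sn /\
       d%:R / sn <= real_complex R (c / n%:R ^+ 2)).
Proof.
move=> ht pT0 rho.
have /andP[t0 t1] := ht.
split.
  move=> e he T Tmhalf beta s.
  have ee := vnorm1 he.
  have [pdT hinv _ _ _] := seq_facts ht pT0 ee.
  have [breal sreal hbeta hs [hbl hsl _]] := real_facts ht pT0 ee.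
  split; first exact: pdT.
  split; first exact: hinv.
  split; first exact: hbeta.
  split; first exact: hs.
  split.
    move=> n; rewrite /beta (breal n) (breal 0%N) -rmorphD lecR; exact: hbl.
  move=> n; rewrite /s /beta (sreal n) (sreal 0%N) (breal 0%N) -rmorphM -!rmorphD lecR natM1.
  exact: hsl.
pose N := opnorm T0.
pose s0 := complex.Re (\tr (invmx T0)).
pose K2 := tau ^+ 2 / (2 * (1 - tau) ^+ 2 * N).
pose m := Num.min s0 (K2 / 2).
exists (Num.max 1 (d%:R / m)); split; first by rewrite lt_max ltr01.
move=> e he n n1 sn.
have ee := vnorm1 he.
have [pdT _ _ _ _] := seq_facts ht pT0 ee.
have [breal sreal _ _ [_ hsl [b0 s0pos Npos d0]]] := real_facts ht pT0 ee.
have [_ [sr_eq hlam]] := lambda_min_le (pdT n) d0.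
have hs := hsl n.
move: hs hlam sr_eq; rewrite /sn.
move: (complex.Re (\tr (invmx (Tseq tau e T0 n)))) => srn hs hlam ->.
split.
  by rewrite -(rmorph_nat (real_complex R)) -fmorph_div lecR.
rewrite -(rmorph_nat (real_complex R)) -fmorph_div lecR.
set x := (n%:R : R) in hs *.
have x1 : 1 <= x by rewrite /x ler1n.
have kpos : 0 < tau / (1 - tau) by rewrite divr_gt0 // subr_gt0.
have K2pos : 0 < K2.
  rewrite /K2; apply: divr_gt0; first exact: exprn_gt0.
  apply: mulr_gt0; last exact: Npos.
  by apply: mulr_gt0 => //; apply: exprn_gt0; rewrite subr_gt0.
have mpos : 0 < m by rewrite /m lt_min s0pos divr_gt0.
have ms0 : m <= s0 by rewrite /m ge_min lexx.
have mK2 : m <= K2 / 2 by rewrite /m ge_min lexx orbT.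
have kxb : 0 <= tau / (1 - tau) * x * complex.Re (inner e (invmx T0 *m e)).
  by apply: mulr_ge0 => //; apply: mulr_ge0; [exact: ltW | lra].
have xx : 0 <= x * (x - 1) by apply: mulr_ge0; lra.
have hK : K2 * (x * (x - 1)) >= 2 * m * (x * (x - 1)).
  by apply: ler_wpM2r => //; lra.
have srn_ge : m * x ^+ 2 <= srn.
  have : m * x ^+ 2 <= m + 2 * m * (x * (x - 1)).
    have : 0 <= m * (x - 1) ^+ 2 by apply: mulr_ge0; [exact: ltW | exact: sqr_ge0].
    have -> : m + 2 * m * (x * (x - 1)) = m * x ^+ 2 + m * (x - 1) ^+ 2 by ring.
    lra.
  move=> h1; apply: (le_trans h1).
  have hs' : s0 + tau / (1 - tau) * x * complex.Re (inner e (invmx T0 *m e))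
             + K2 * (x * (x - 1)) <= srn := hs.
  apply: le_trans hs'; apply: lerD; last exact: hK.
  by apply: (le_trans ms0); rewrite lerDl.
have srpos : 0 < srn by apply: lt_le_trans srn_ge; apply: mulr_gt0 => //; apply: exprn_gt0; lra.
set c := Num.max 1 (d%:R / m).
have hc : d%:R <= c * m by rewrite -ler_pdivrMr // /c le_max lexx orbT.
have x2 : 0 < x ^+ 2 by apply: exprn_gt0; lra.
have c0 : 0 <= c / x ^+ 2 by apply: divr_ge0; [apply: ltW; rewrite /c lt_max ltr01 | exact: ltW].
rewrite ler_pdivrMr //.
apply: (le_trans hc).
have xnz : x != 0 by apply: lt0r_neq0; apply: lt_le_trans x1.
have -> : c * m = c / x ^+ 2 * (m * x ^+ 2).
  by field; rewrite ?xnz ?expf_neq0.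
exact: ler_wpM2l.
Qed.
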